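(* Let $s\ge2$ and let $r>0$ satisfy $r\ge s+2$ and $\|u\|^2+\|w\|^2\le r$ for all $u\in\mathbb R^{s+1}$ with $u_1=1$, $\|(u_2,\dots,u_{s+1})\|_2\le1$ and all extreme points $w$ of $\{w\in\mathbb R^{2s}:w\ge0,B^Tw=d\}$. Define \[ Z:=\frac14\Big[\begin{pmatrix}2e_1\\ \mathbb 1_{2s}\end{pmatrix}\begin{pmatrix}2e_1\\ \mathbb 1_{2s}\end{pmatrix}^T+\sum_{i=1}^s\begin{pmatrix}\tfrac{2}{\sqrt s}e_{i+1}\\ f_{2i-1}-f_{2i}\end{pmatrix}\begin{pmatrix}\tfrac{2}{\sqrt s}e_{i+1}\\ f_{2i-1}-f_{2i}\end{pmatrix}^T\Big]\in\mathcal S^{3s+1}. \] Then $Z$ is an optimal solution of the problem \[ \max\ F\bullet Z_{21}\ \ \text{s.t.}\ \ \mathrm{diag}(EZE^T)=0,\ I\bullet Z\le r,\ J\bullet Z_{11}\ge0,\ Z_{11}e_1\in\widehat{\mathcal U}_2,\ Z_{22}\ge0,\ \text{each row of }Z_{21}\in\widehat{\mathcal U}_2,\ Z\succeq0,\ g_1g_1^T\bullet Z=1, \] and its objective value is $F\bullet Z_{21}=\tfrac12(\sqrt s+s)$.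
   Context: $k=s+1$, $m=2s$. $e_1,\dots,e_{s+1}$ standard basis of $\mathbb R^{s+1}$; $f_1,\dots,f_{2s}$ standard basis of $\mathbb R^{2s}$; $\epsilon_j$ standard basis of $\mathbb R^s$; $\mathbb 1_{2s}$ all-ones vector; $g_1=(e_1;0)\in\mathbb R^{3s+1}$. $d:=\epsilon_s$. $B\in\mathbb R^{2s\times s}$: rows $2i-1$ and $2i$ both equal $\epsilon_1^T$ for $i=1$ and both equal $-\epsilon_{i-1}^T+\epsilon_i^T$ for $i=2,\dots,s$. $F\in\mathbb R^{2s\times(s+1)}$: row $2i-1$ is $\tfrac12(e_1+e_{i+1})^T$, row $2i$ is $\tfrac12(e_1-e_{i+1})^T$. $E:=\begin{pmatrix}-de_1^T&B^T\end{pmatrix}$. $J:=\mathrm{Diag}(1,-1,\dots,-1)\in\mathcal S^{s+1}$. $\widehat{\mathcal U}_2:=\{u\in\mathbb R^{s+1}:\|(u_2,\dots,u_{s+1})\|_2\le u_1\}$. $Z$ is partitioned as $\begin{pmatrix}Z_{11}&Z_{21}^T\\Z_{21}&Z_{22}\end{pmatrix}$ with $Z_{11}\in\mathcal S^{s+1}$, $Z_{21}\in\mathbb R^{2s\times(s+1)}$, $Z_{22}\in\mathcal S^{2s}$. $A\bullet B:=\mathrm{trace}(A^TB)$; $\mathrm{diag}(\cdot)$ is the vector of diagonal entries; $Z_{22}\ge0$ is entrywise. *)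

(* Defs.v *)
From HB Require Import structures.
From mathcomp Require Import all_boot all_order all_algebra.
Unset Strict Implicit. Unset Printing Implicit Defensive.
Import Order.TTheory GRing.Theory Num.Theory.
Local Open Scope ring_scope.

Section Defs.
Variable R : rcfType.

Definition frob {m n : nat} (A B : 'M[R]_(m, n)) : R := \tr (A^T *m B).

(* standard basis column vector of R^n, index k (0-based) *)
Definition ev (n k : nat) : 'cV[R]_n := \col_(j < n) ((j == k :> nat)%:R).

Definition ones (n : nat) : 'cV[R]_n := const_mx 1.

Definition symmetric {n : nat} (A : 'M[R]_n) : Prop := A^T = A.

Definition psd {n : nat} (A : 'M[R]_n) : Prop :=
  forall x : 'cV[R]_n, 0 <= (x^T *m A *m x) 0 0.

Definition sqnorm {n : nat} (x : 'cV[R]_n) : R := \sum_(i < n) x i 0 ^+ 2.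

Definition tailnorm {s : nat} (u : 'cV[R]_s.+1) : R :=
  Num.sqrt (\sum_(i < s) u (lift ord0 i) 0 ^+ 2).

Definition U2hat {s : nat} (u : 'cV[R]_s.+1) : Prop := tailnorm u <= u ord0 0.

(* d := eps_s in R^s (0-based index s-1) *)
Definition dvec (s : nat) : 'cV[R]_s := ev s s.-1.

(* B in R^{2s x s}: rows 2i-1,2i (1-based) equal eps_1^T for i=1,
   and -eps_{i-1}^T + eps_i^T for i=2..s.  0-based: row j, i0 := j/2,
   entry k is [k == i0] - [i0 > 0 and k == i0 - 1]. *)
Definition Bmat (s : nat) : 'M[R]_(s.*2, s) :=
  \matrix_(j < s.*2, k < s)
    (((k == j./2 :> nat)%:R) - (((0 < j./2)%N && (k == (j./2).-1 :> nat))%:R)).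

(* F in R^{2s x (s+1)}: row 2i-1 = 1/2 (e_1 + e_{i+1})^T, row 2i = 1/2 (e_1 - e_{i+1})^T.
   0-based: row j, i0 := j/2, entry k = 1/2([k==0] + (-1)^(odd j) [k == i0+1]). *)
Definition Fmat (s : nat) : 'M[R]_(s.*2, s.+1) :=
  \matrix_(j < s.*2, k < s.+1)
    (2^-1 * (((k == 0 :> nat)%:R) + (-1) ^+ (odd j) * ((k == (j./2).+1 :> nat)%:R))).

Definition Emat (s : nat) : 'M[R]_(s, s.+1 + s.*2) :=
  row_mx (- (dvec s *m (ev s.+1 0)^T)) (Bmat s)^T.

Definition Jmat (s : nat) : 'M[R]_(s.+1) :=
  \matrix_(i, j) (if i == j then (if (i == 0 :> nat) then 1 else -1) else 0).

Definition g1 (s : nat) : 'cV[R]_(s.+1 + s.*2) := col_mx (ev s.+1 0) 0.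

Definition Z11 {s : nat} (Z : 'M[R]_(s.+1 + s.*2)) : 'M[R]_(s.+1) := ulsubmx Z.
Definition Z21 {s : nat} (Z : 'M[R]_(s.+1 + s.*2)) : 'M[R]_(s.*2, s.+1) := dlsubmx Z.
Definition Z22 {s : nat} (Z : 'M[R]_(s.+1 + s.*2)) : 'M[R]_(s.*2) := drsubmx Z.

Definition Wpoly (s : nat) (w : 'cV[R]_(s.*2)) : Prop :=
  (forall j, 0 <= w j 0) /\ (Bmat s)^T *m w = dvec s.

Definition extreme_point {n : nat} (P : 'cV[R]_n -> Prop) (w : 'cV[R]_n) : Prop :=
  P w /\ forall w1 w2 t, P w1 -> P w2 -> 0 < t -> t < 1 ->
    w = t *: w1 + (1 - t) *: w2 -> w1 = w2.

Definition objective {s : nat} (Z : 'M[R]_(s.+1 + s.*2)) : R := frob (Fmat s) (Z21 Z).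

Definition feasible (s : nat) (r : R) (Z : 'M[R]_(s.+1 + s.*2)) : Prop :=
  symmetric Z /\
  (forall i, (Emat s *m Z *m (Emat s)^T) i i = 0) /\
  frob 1%:M Z <= r /\
  0 <= frob (Jmat s) (Z11 Z) /\
  U2hat (Z11 Z *m ev s.+1 0) /\
  (forall i j, 0 <= Z22 Z i j) /\
  (forall i, U2hat (row i (Z21 Z))^T) /\
  psd Z /\
  frob (g1 s *m (g1 s)^T) Z = 1.

Definition optimal (s : nat) (r : R) (Z : 'M[R]_(s.+1 + s.*2)) : Prop :=
  feasible s r Z /\ forall Z', feasible s r Z' -> objective Z' <= objective Z.

Definition v0 (s : nat) : 'cV[R]_(s.+1 + s.*2) :=
  col_mx (2%:R *: ev s.+1 0) (ones s.*2).
Definition vi {s : nat} (i : 'I_s) : 'cV[R]_(s.+1 + s.*2) :=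
  col_mx ((2%:R / Num.sqrt s%:R) *: ev s.+1 i.+1)
         (ev s.*2 (i.*2) - ev s.*2 (i.*2).+1).
Definition Zstar (s : nat) : 'M[R]_(s.+1 + s.*2) :=
  4%:R^-1 *: (v0 s *m (v0 s)^T + \sum_(i < s) vi i *m (vi i)^T).

End Defs.

(* Main.v *)
Require Import Defs.
From HB Require Import structures.
From mathcomp Require Import all_boot all_order all_algebra.
From mathcomp Require Import ring lra zify.
Import Order.TTheory GRing.Theory Num.Theory.
Local Open Scope ring_scope.


Lemma sum1o {R : rcfType} n (c0 : 'I_n) (f : 'I_n -> R) :
  \sum_(c < n) ((c == c0 :> nat)%:R * f c) = f c0.
Proof.
rewrite (bigD1 c0) //= eqxx mul1r big1 ?addr0 // => c /negPf hc.
by have -> : (c == c0 :> nat) = false by [] ; rewrite mul0r.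
Qed.

Lemma sum1n {R : rcfType} n (a : nat) (f : nat -> R) :
  \sum_(c < n) ((c == a :> nat)%:R * f c) = (a < n)%:R * f a.
Proof.
case: (ltnP a n) => h.
  by rewrite (@sum1o R n (Ordinal h) (fun c : 'I_n => f c)) mul1r.
rewrite mul0r big1 // => c _.
have -> : (c == a :> nat) = false by apply/eqP => e; move: (ltn_ord c); lia.
by rewrite mul0r.
Qed.

Lemma sum_pairs {R : rcfType} n (g : nat -> R) :
  \sum_(j < n.*2) g j = \sum_(i < n) (g i.*2 + g i.*2.+1).
Proof.
rewrite -(big_mkord xpredT g) -(big_mkord xpredT (fun i => g i.*2 + g i.*2.+1)).
elim: n => [|n IH]; first by rewrite !big_geq.
by rewrite doubleS !big_nat_recr //= IH addrA.
Qed.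

Lemma BTg {R : rcfType} s (g : nat -> R) (k : 'I_s) :
  \sum_(j < s.*2) Bmat R s j k * g j =
  (g k.*2 + g k.*2.+1) - (k.+1 < s)%:R * (g k.+1.*2 + g k.+1.*2.+1).
Proof.
set h := fun n : nat => (((k:nat) == n./2)%:R - (((0 < n./2)%N && ((k:nat) == (n./2).-1))%:R)) * g n.
rewrite (eq_bigr (fun j : 'I_(s.*2) => h (val j))); last by move=> j _; rewrite /Z22 !mxE.
rewrite (sum_pairs s h) /h.
have H1 : forall i, (i.*2.+1)./2 = i by move=> i; lia.
have E : forall i : nat, ((0 < i)%N && ((k:nat) == i.-1)) = (i == k.+1 :> nat).
  by case=> [|i] //=; rewrite eqSS eq_sym.
under eq_bigr => i _ do rewrite H1 doubleK E eq_sym -mulrDr mulrBl.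
rewrite sumrB (sum1n s k (fun i => g i.*2 + g i.*2.+1)) ltn_ord mul1r.
by rewrite (sum1n s k.+1 (fun i => g i.*2 + g i.*2.+1)).
Qed.

Lemma pairs_const {R : rcfType} s (g : nat -> R) (a : R) : (0 < s)%N ->
  (forall k : 'I_s, \sum_(j < s.*2) Bmat R s j k * g j = a * dvec R s k 0) ->
  forall i, (i < s)%N -> g i.*2 + g i.*2.+1 = a.
Proof.
move=> s0 hyp.
have H : forall k (hk : (k < s)%N), (g k.*2 + g k.*2.+1) - (k.+1 < s)%:R * (g k.+1.*2 + g k.+1.*2.+1)
    = a * (k == s.-1)%:R.
  by move=> k hk; have := hyp (Ordinal hk); rewrite BTg /dvec /ev mxE.
suff: forall n k, (k + n = s.-1)%N -> g k.*2 + g k.*2.+1 = a.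
  by move=> S i hi; apply: (S (s.-1 - i)%N); lia.
elim=> [|n IH] k hk.
  have hk' : (k < s)%N by lia.
  have := H k hk'.
  have -> : (k.+1 < s)%N = false by lia.
  have -> : (k == s.-1) = true by apply/eqP; lia.
  by rewrite mul0r subr0 mulr1.
have hk' : (k < s)%N by lia.
have := H k hk'.
have -> : (k.+1 < s)%N = true by lia.
have -> : (k == s.-1) = false by apply/eqP; lia.
rewrite (IH k.+1) ?mul1r ?mulr0; last by lia.
by move/eqP; rewrite subr_eq0 => /eqP.
Qed.

Definition bf {R : rcfType} {n} (Z : 'M[R]_n) (x y : 'cV[R]_n) : R := (x^T *m Z *m y) 0 0.

Lemma bfDl {R : rcfType} {n} (Z : 'M[R]_n) x1 x2 y : bf Z (x1 + x2) y = bf Z x1 y + bf Z x2 y.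
Proof. by rewrite /bf linearD /= !mulmxDl mxE. Qed.
Lemma bfDr {R : rcfType} {n} (Z : 'M[R]_n) x y1 y2 : bf Z x (y1 + y2) = bf Z x y1 + bf Z x y2.
Proof. by rewrite /bf !mulmxDr mxE. Qed.
Lemma bfZl {R : rcfType} {n} (Z : 'M[R]_n) a x y : bf Z (a *: x) y = a * bf Z x y.
Proof. by rewrite /bf linearZ /= -!scalemxAl mxE. Qed.
Lemma bfZr {R : rcfType} {n} (Z : 'M[R]_n) a x y : bf Z x (a *: y) = a * bf Z x y.
Proof. by rewrite /bf -!scalemxAr mxE. Qed.
Lemma bfC {R : rcfType} {n} (Z : 'M[R]_n) x y : Defs.symmetric R Z -> bf Z x y = bf Z y x.
Proof.
move=> hZ; rewrite /bf.
have -> : (x^T *m Z *m y) 0 0 = ((x^T *m Z *m y)^T) 0 0 by rewrite [RHS]mxE.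
by rewrite !trmx_mul trmxK hZ mulmxA.
Qed.
Lemma bf_delta {R : rcfType} {n} (Z : 'M[R]_n) p q : bf Z (delta_mx p 0) (delta_mx q 0) = Z p q.
Proof. by rewrite /bf trmx_delta -rowE -colE !mxE. Qed.
Lemma bf_deltal {R : rcfType} {n} (Z : 'M[R]_n) p x : bf Z (delta_mx p 0) x = (Z *m x) p 0.
Proof. by rewrite /bf trmx_delta -mulmxA -rowE mxE. Qed.

Lemma psd_null {R : rcfType} {n} (Z : 'M[R]_n) x : Defs.symmetric R Z -> psd R Z ->
  bf Z x x = 0 -> Z *m x = 0.
Proof.
move=> hs hp h0; apply/matrixP => i j; rewrite (ord1 j) [RHS]mxE -bf_deltal.
set y : 'cV[R]_n := delta_mx i 0.
set b := bf Z y x; set c := bf Z y y.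
have c0 : 0 <= c by apply: hp.
set u := (c + 1)^-1.
have uc : u * (c + 1) = 1 by rewrite mulVf // gt_eqF // ltr_wpDl.
have u0 : 0 < u by rewrite invr_gt0 ltr_wpDl.
have := hp (x + (- b * u) *: y).
rewrite -/(bf Z _ _) !bfDl !bfDr !bfZl !bfZr h0 (bfC _ x y hs) -/b -/c => H.
have H2 : 0 <= - (b ^+ 2 * u) * (1 + u).
  have -> : - (b ^+ 2 * u) * (1 + u) = 0 + (- b * u) * b + ((- b * u) * b + (- b * u) * ((- b * u) * c)).
    have ec : c = u^-1 - 1 by rewrite /u invrK; ring.
    rewrite ec; field; exact: lt0r_neq0.
  by [].
have : b ^+ 2 * (u * (1 + u)) <= 0.
  by rewrite mulrA -oppr_ge0 -mulNr.
have pos : 0 < u * (1 + u) by apply: mulr_gt0 => //; lra.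
rewrite pmulr_lle0 // => hb.
by apply/eqP; rewrite -sqrf_eq0 eq_le hb sqr_ge0.
Qed.

Lemma AZ0 {R : rcfType} {p n} (A : 'M[R]_(p, n)) (Z : 'M[R]_n) :
  Defs.symmetric R Z -> psd R Z -> (forall k, (A *m Z *m A^T) k k = 0) -> A *m Z = 0.
Proof.
move=> hs hp h; apply/row_matrixP => k; rewrite row_mul linear0.
have e : bf Z (row k A)^T (row k A)^T = (A *m Z *m A^T) k k.
  rewrite /bf trmxK !mxE; apply: eq_bigr => j _; rewrite !mxE; congr (_ * _).
  by apply: eq_bigr => l _; rewrite !mxE.
have := @psd_null R n Z _ hs hp (etrans e (h k)).
by move=> h0; rewrite -[row k A *m Z]trmxK trmx_mul hs h0 trmx0.
Qed.

Lemma EZ_entry {R : rcfType} s {n} (Z : 'M[R]_(s.+1 + s.*2, n)) (k : 'I_s) m :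
  (Emat R s *m Z) k m =
  - (dvec R s k 0 * Z (lshift _ ord0) m) + \sum_(j < s.*2) Bmat R s j k * Z (rshift _ j) m.
Proof.
rewrite mxE big_split_ord /=; congr (_ + _).
  rewrite (eq_bigr (fun i : 'I_s.+1 => (i == (ord0 : 'I_s.+1) :> nat)%:R * (- (dvec R s k 0 * Z (lshift _ i) m)))).
    by rewrite sum1o.
  move=> i _; rewrite row_mxEl !mxE big_ord1 !mxE /=.
  ring.
by apply: eq_bigr => j _; rewrite /Emat row_mxEr mxE.
Qed.

Lemma frob_outer {R : rcfType} {n} (x : 'cV[R]_n) (Z : 'M[R]_n) :
  frob R (x *m x^T) Z = bf Z x x.
Proof.
by rewrite /frob /bf trmx_mul trmxK -[in LHS]mulmxA mxtrace_mulC trace_mx11.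
Qed.

Lemma g1_delta {R : rcfType} s : g1 R s = delta_mx (lshift s.*2 (ord0 : 'I_s.+1)) 0.
Proof.
apply/matrixP => a b; rewrite (ord1 b) /g1 /ev !mxE; case: splitP => c hc; rewrite !mxE -(inj_eq val_inj) /= hc ?eqxx ?andbT //.
Qed.

Lemma Zsym {R : rcfType} {n} (Z : 'M[R]_n) : Defs.symmetric R Z -> forall p q, Z p q = Z q p.
Proof. by move=> hs p q; rewrite -[in LHS]hs mxE. Qed.

Lemma frobJ {R : rcfType} s (A : 'M[R]_s.+1) :
  frob R (Jmat R s) A = A 0 0 - \sum_(i < s) A (lift ord0 i) (lift ord0 i).
Proof.
rewrite /frob /mxtrace.
rewrite (eq_bigr (fun c : 'I_s.+1 => (if (c == 0 :> nat) then 1 else -1) * A c c)); last first.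
  move=> c _; rewrite /Z22 !mxE.
  rewrite (eq_bigr (fun e : 'I_s.+1 => (e == c :> nat)%:R * ((if (c == 0 :> nat) then 1 else -1) * A c c))).
    by rewrite sum1o.
  move=> e _; rewrite !mxE.
  case: (eqVneq e c) => [->|ne]; first by rewrite eqxx mul1r.
  have -> : (e == c :> nat) = false by apply/negP => /eqP /val_inj; apply/eqP.
  by rewrite !mul0r.
rewrite big_ord_recl /= mul1r; congr (_ + _); rewrite -sumrN; apply: eq_bigr => i _.
by rewrite mulN1r.
Qed.

Lemma inord0 {s : nat} : inord 0 = (ord0 : 'I_s.+1).
Proof. by apply: val_inj => /=; rewrite inordK. Qed.

Lemma obj_formula {R : rcfType} s (j0 : 'I_(s.*2)) (Z : 'M[R]_(s.+1 + s.*2)) :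
  objective R Z = 2^-1 * \sum_(j < s.*2) Z (rshift s.+1 j) (lshift s.*2 ord0)
   + 2^-1 * \sum_(i < s) (Z (rshift s.+1 (insubd j0 i.*2)) (lshift s.*2 (inord i.+1))
                        - Z (rshift s.+1 (insubd j0 i.*2.+1)) (lshift s.*2 (inord i.+1))).
Proof.
have inner : forall j : 'I_(s.*2),
   \sum_(c < s.+1) (2^-1 * ((c == 0 :> nat)%:R + (-1)^+odd j * (c == (j./2).+1 :> nat)%:R))
       * Z (rshift s.+1 j) (lshift s.*2 c)
   = 2^-1 * (Z (rshift s.+1 j) (lshift s.*2 ord0)
       + (-1)^+odd j * Z (rshift s.+1 j) (lshift s.*2 (inord (j./2).+1))).
  move=> j.
  rewrite (eq_bigr (fun c : 'I_s.+1 => (c == 0 :> nat)%:R * (2^-1 * Z (rshift s.+1 j) (lshift s.*2 (inord c)))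
       + (c == (j./2).+1 :> nat)%:R * (2^-1 * (-1)^+odd j * Z (rshift s.+1 j) (lshift s.*2 (inord c))))); last first.
    by move=> c _; rewrite inord_val; ring.
  rewrite big_split /= (sum1n s.+1 0 (fun n => 2^-1 * Z (rshift s.+1 j) (lshift s.*2 (inord n)))).
  rewrite (sum1n s.+1 (j./2).+1 (fun n => 2^-1 * (-1)^+odd j * Z (rshift s.+1 j) (lshift s.*2 (inord n)))).
  have -> : ((j./2).+1 < s.+1)%N = true by have := ltn_ord j; lia.
  rewrite inord0 /=; ring.
rewrite /objective /frob /mxtrace.
rewrite (eq_bigr (fun c : 'I_s.+1 => \sum_(j < s.*2) (2^-1 * ((c == 0 :> nat)%:R + (-1)^+odd j * (c == (j./2).+1 :> nat)%:R))
       * Z (rshift s.+1 j) (lshift s.*2 c))); last first.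
  by move=> c _; rewrite mxE; apply: eq_bigr => j _; rewrite !mxE.
rewrite exchange_big /=.
rewrite (eq_bigr _ (fun j _ => inner j)).
under eq_bigr => j _ do rewrite mulrDr.
rewrite big_split /= -!mulr_sumr; congr (_ + _ * _).
set h := fun n => (-1)^+odd n * Z (rshift s.+1 (insubd j0 n)) (lshift s.*2 (inord (n./2).+1)).
rewrite (eq_bigr (fun j : 'I_(s.*2) => h j)); last by move=> j _; rewrite /h valKd.
rewrite sum_pairs; apply: eq_bigr => i _; rewrite /h /= odd_double doubleK.
have -> : uphalf i.*2 = i by rewrite uphalf_half odd_double doubleK.
by rewrite expr0 expr1 mul1r mulN1r.
Qed.

Lemma upper {R : rcfType} s r (Z : 'M[R]_(s.+1 + s.*2)) : (0 < s)%N ->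
  feasible R s r Z -> objective R Z <= 2^-1 * (Num.sqrt s%:R + s%:R).
Proof.
move=> s0 [hs [hE [htr [hJ [hU [h22 [hrows [hp hg]]]]]]]].
have hs2 : (0 < s.*2)%N by rewrite double_gt0.
pose j0 := Ordinal hs2.
have EZ := @AZ0 R s _ (Emat R s) Z hs hp hE.
have Z00 : Z (lshift s.*2 ord0) (lshift s.*2 ord0) = 1.
  by move: hg; rewrite g1_delta frob_outer bf_delta.
have col : forall m i, (i < s)%N -> Z (rshift s.+1 (insubd j0 i.*2)) m
     + Z (rshift s.+1 (insubd j0 i.*2.+1)) m = Z (lshift s.*2 ord0) m.
  move=> m; apply: (@pairs_const R s (fun n => Z (rshift s.+1 (insubd j0 n)) m) _ s0) => k.
  have := EZ_entry s Z k m; rewrite EZ mxE => e.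
  rewrite (eq_bigr (fun j : 'I_(s.*2) => Bmat R s j k * Z (rshift s.+1 j) m)); last first.
    by move=> j _; rewrite valKd.
  lra.
have w1 : forall i, (i < s)%N -> Z (rshift s.+1 (insubd j0 i.*2)) (lshift s.*2 ord0)
     + Z (rshift s.+1 (insubd j0 i.*2.+1)) (lshift s.*2 ord0) = 1.
  by move=> i hi; rewrite col // Z00.
have sw : \sum_(j < s.*2) Z (rshift s.+1 j) (lshift s.*2 ord0) = s%:R.
  rewrite (eq_bigr (fun j : 'I_(s.*2) => (fun n => Z (rshift s.+1 (insubd j0 n)) (lshift s.*2 ord0)) j)); last first.
    by move=> j _; rewrite valKd.
  rewrite (sum_pairs s (fun n => Z (rshift s.+1 (insubd j0 n)) (lshift s.*2 ord0))) /=.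
  rewrite (eq_bigr (fun _ => 1)); last by move=> i _; rewrite w1.
  by rewrite sumr_const card_ord.
have hJ' : \sum_(i < s) Z (lshift s.*2 (inord i.+1)) (lshift s.*2 (inord i.+1)) <= 1.
  move: hJ; rewrite frobJ /Z11 !mxE -Z00 subr_ge0.
  congr (_ <= _); apply: eq_bigr => i _; rewrite !mxE.
  have -> : lift ord0 i = inord i.+1 by apply: val_inj => /=; rewrite inordK /bump ?add1n // ltnS.
  by [].
have sq : Num.sqrt (s%:R : R) ^+ 2 = s%:R by rewrite sqr_sqrtr // ler0n.
have t0 : 0 < Num.sqrt (s%:R : R) by rewrite sqrtr_gt0 ltr0n.
set t := Num.sqrt (s%:R : R) in sq t0 *.
have per : forall i : 'I_s,
  2 * t * (Z (rshift s.+1 (insubd j0 i.*2)) (lshift s.*2 (inord i.+1))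
           - Z (rshift s.+1 (insubd j0 i.*2.+1)) (lshift s.*2 (inord i.+1)))
  <= t ^+ 2 * Z (lshift s.*2 (inord i.+1)) (lshift s.*2 (inord i.+1)) + 1.
  move=> i.
  set a := lshift s.*2 (inord i.+1 : 'I_s.+1).
  set b0 := rshift s.+1 (insubd j0 i.*2).
  set b1 := rshift s.+1 (insubd j0 i.*2.+1).
  set l0 := lshift s.*2 (ord0 : 'I_s.+1).
  have c0 := col b0 i (ltn_ord i).
  have c1 := col b1 i (ltn_ord i).
  have w := w1 i (ltn_ord i).
  have n01 : 0 <= Z b0 b1 by have := h22 (insubd j0 i.*2) (insubd j0 i.*2.+1); rewrite /Z22 !mxE.
  have n10 : 0 <= Z b1 b0 by have := h22 (insubd j0 i.*2.+1) (insubd j0 i.*2); rewrite /Z22 !mxE.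
  have e1 := Zsym Z hs l0 b0.
  have e2 := Zsym Z hs l0 b1.
  have e3 := Zsym Z hs b1 b0.
  have e4 := Zsym Z hs a b0.
  have e5 := Zsym Z hs a b1.
  have := hp ((- t) *: delta_mx a 0 + delta_mx b0 0 + (-1) *: delta_mx b1 0).
  rewrite -/(bf Z _ _) !bfDl !bfDr !bfZl !bfZr !bf_delta.
  rewrite -/l0 -/b0 -/b1 in c0 c1 w.
  nra.
rewrite (obj_formula s j0) sw.
set S := \sum_(i < s) _.
set A := \sum_(i < s) Z (lshift s.*2 (inord i.+1)) (lshift s.*2 (inord i.+1)) in hJ'.
have hS : 2 * t * S <= t ^+ 2 * A + s%:R.
  rewrite /S mulr_sumr; apply: le_trans (ler_sum _ (fun i _ => per i)) _.
  by rewrite big_split /= -mulr_sumr sumr_const card_ord.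
have : S <= t by nra.
lra.
Qed.


Lemma Zstar_entry {R : rcfType} s p q : Zstar R s p q =
  4%:R^-1 * (v0 R s p 0 * v0 R s q 0 + \sum_(i < s) vi R i p 0 * vi R i q 0).
Proof.
rewrite /Zstar mxE mxE summxE; congr (_ * (_ + _)).
  by rewrite [(v0 R s *m _) _ _]mxE big_ord1 [(v0 R s)^T _ _]mxE.
by apply: eq_bigr => i _; rewrite [(vi R i *m _) _ _]mxE big_ord1 [(vi R i)^T _ _]mxE.
Qed.

Lemma v0L {R : rcfType} s a : v0 R s (lshift s.*2 a) 0 = 2%:R * (a == 0 :> nat)%:R.
Proof. by rewrite /v0 col_mxEu !mxE. Qed.
Lemma v0R {R : rcfType} s j : v0 R s (rshift s.+1 j) 0 = 1.
Proof. by rewrite /v0 col_mxEd !mxE. Qed.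
Lemma viL {R : rcfType} s (i : 'I_s) a :
  vi R i (lshift s.*2 a) 0 = (2%:R / Num.sqrt s%:R) * (a == i.+1 :> nat)%:R.
Proof. by rewrite /vi col_mxEu !mxE. Qed.
Lemma viR {R : rcfType} s (i : 'I_s) j :
  vi R i (rshift s.+1 j) 0 = (j == i.*2 :> nat)%:R - (j == i.*2.+1 :> nat)%:R.
Proof. by rewrite /vi col_mxEd !mxE. Qed.

Lemma uE {R : rcfType} (i j : nat) :
  (j == i.*2)%:R - (j == i.*2.+1)%:R = (i == j./2)%:R * (-1) ^+ odd j :> R.
Proof.
have hj := odd_double_half j.
case: (odd j) hj => /= hj.
  have -> : (j == i.*2) = false by apply/eqP; lia.
  have -> : (j == i.*2.+1) = (i == j./2) by apply/eqP/eqP; lia.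
  by rewrite expr1 mulrN1 sub0r.
have -> : (j == i.*2.+1) = false by apply/eqP; lia.
have -> : (j == i.*2) = (i == j./2) by apply/eqP/eqP; lia.
by rewrite expr0 mulr1 subr0.
Qed.

Lemma ZRR {R : rcfType} s (j j' : 'I_(s.*2)) :
  Zstar R s (rshift s.+1 j) (rshift s.+1 j') =
  4%:R^-1 * (1 + (j./2 == j'./2 :> nat)%:R * ((-1) ^+ odd j * (-1) ^+ odd j')).
Proof.
rewrite Zstar_entry !v0R mul1r; congr (_ * (_ + _)).
rewrite (eq_bigr (fun i : 'I_s => ((i : nat) == j./2)%:R *
     ((-1) ^+ odd j * (((i : nat) == j'./2)%:R * (-1) ^+ odd j')))); last first.
  by move=> i _; rewrite !viR !uE mulrA.
rewrite (sum1n s j./2 (fun n => (-1) ^+ odd j * ((n == j'./2)%:R * (-1) ^+ odd j'))).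
have -> : (j./2 < s)%N = true by have := ltn_ord j; lia.
by rewrite mul1r; ring.
Qed.

Lemma ZRL {R : rcfType} s (j : 'I_(s.*2)) (a : 'I_s.+1) :
  Zstar R s (rshift s.+1 j) (lshift s.*2 a) =
  4%:R^-1 * (2%:R * (a == 0 :> nat)%:R
     + (-1) ^+ odd j * (2%:R / Num.sqrt s%:R) * (a == (j./2).+1 :> nat)%:R).
Proof.
rewrite Zstar_entry v0R v0L mul1r; congr (_ * (_ + _)).
rewrite (eq_bigr (fun i : 'I_s => ((i : nat) == j./2)%:R *
     ((-1) ^+ odd j * ((2%:R / Num.sqrt s%:R) * (a == i.+1 :> nat)%:R)))); last first.
  by move=> i _; rewrite viR viL uE mulrA.
rewrite (sum1n s j./2 (fun n => (-1) ^+ odd j * ((2%:R / Num.sqrt s%:R) * (a == n.+1 :> nat)%:R))).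
have -> : (j./2 < s)%N = true by have := ltn_ord j; lia.
by rewrite mul1r mulrA.
Qed.

Lemma ZL0 {R : rcfType} s (a : 'I_s.+1) :
  Zstar R s (lshift s.*2 a) (lshift s.*2 ord0) = (a == 0 :> nat)%:R.
Proof.
rewrite Zstar_entry !v0L big1; last by move=> i _; rewrite !viL /= mulr0n !mulr0.
rewrite addr0 /= mulr1; case: (a == 0 :> nat); rewrite ?mulr1 ?mulr0 ?mul0r //.
  by rewrite /= -natrM mulVf // pnatr_eq0.
by rewrite mulr0.
Qed.

Lemma ZLdiag {R : rcfType} s (c : 'I_s) :
  Zstar R s (lshift s.*2 (lift ord0 c)) (lshift s.*2 (lift ord0 c)) = s%:R^-1.
Proof.
rewrite Zstar_entry !v0L lift0 /= mulr0 mul0r add0r.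
rewrite (eq_bigr (fun i : 'I_s => ((i : nat) == c)%:R * ((2%:R / Num.sqrt s%:R) ^+ 2))); last first.
  move=> i _; rewrite !viL lift0 eqSS eq_sym.
  by case: (i == c :> nat); rewrite ?mulr0 ?mul0r ?mulr1 ?mul1r // expr2.
rewrite (sum1n s c (fun _ => (2%:R / Num.sqrt s%:R) ^+ 2)) ltn_ord mul1r.
have s0 : (0 < s)%N by have := ltn_ord c; lia.
have sq : Num.sqrt (s%:R : R) ^+ 2 = s%:R by rewrite sqr_sqrtr // ler0n.
have t0 : Num.sqrt (s%:R : R) != 0 by rewrite sqrtr_eq0 -ltNge ltr0n.
rewrite expr_div_n sq; field.
by rewrite pnatr_eq0 -lt0n.
Qed.

Lemma Zstar_sym {R : rcfType} s : Defs.symmetric R (Zstar R s).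
Proof.
apply/matrixP => p q; rewrite mxE !Zstar_entry; congr (_ * (_ + _)).
  by rewrite mulrC.
by apply: eq_bigr => i _; rewrite mulrC.
Qed.

Lemma Ev0 {R : rcfType} s : Emat R s *m v0 R s = 0.
Proof.
apply/matrixP => k c; rewrite (ord1 c) EZ_entry v0L /= mulr1 [RHS]mxE.
rewrite (eq_bigr (fun j : 'I_(s.*2) => Bmat R s j k * (fun _ => (1 : R)) j)); last first.
  by move=> j _; rewrite v0R.
rewrite (BTg s (fun _ => (1 : R)) k) /dvec /ev mxE.
case: (ltnP k.+1 s) => h.
  have -> : (k == s.-1 :> nat) = false by apply/eqP; lia.
  by rewrite /=; ring.
have -> : (k == s.-1 :> nat) = true by apply/eqP; have := ltn_ord k; lia.
by rewrite /=; ring.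
Qed.

Lemma Evi {R : rcfType} s (i : 'I_s) : Emat R s *m vi R i = 0.
Proof.
apply/matrixP => k c; rewrite (ord1 c) EZ_entry viL /= mulr0n mulr0 mulr0 oppr0 add0r [RHS]mxE.
set g := fun n : nat => (n == i.*2)%:R - (n == i.*2.+1)%:R : R.
rewrite (eq_bigr (fun j : 'I_(s.*2) => Bmat R s j k * g j)); last first.
  by move=> j _; rewrite viR.
have hg : forall m, g m.*2 + g m.*2.+1 = 0.
  move=> m; rewrite /g eqSS.
  have -> : (m.*2 == i.*2.+1) = false by apply/eqP; lia.
  have -> : (m.*2.+1 == i.*2) = false by apply/eqP; lia.
  by rewrite subr0 sub0r subrr.
by rewrite BTg !hg mulr0 subr0.
Qed.

Lemma EZstar {R : rcfType} s : Emat R s *m Zstar R s = 0.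
Proof.
rewrite /Zstar -scalemxAr mulmxDr mulmx_sumr mulmxA Ev0 mul0mx add0r big1 ?scaler0 //.
by move=> i _; rewrite mulmxA Evi mul0mx.
Qed.

Lemma sqrt_facts {R : rcfType} s : (0 < s)%N ->
  Num.sqrt (s%:R : R) ^+ 2 = s%:R /\ 0 < Num.sqrt (s%:R : R) /\ 1 <= Num.sqrt (s%:R : R).
Proof.
move=> s0.
have sq : Num.sqrt (s%:R : R) ^+ 2 = s%:R by rewrite sqr_sqrtr // ler0n.
have t0 : 0 < Num.sqrt (s%:R : R) by rewrite sqrtr_gt0 ltr0n.
have s1 : (1 : R) <= s%:R by rewrite ler1n.
do 2 split => //; nra.
Qed.

Lemma tr_split {R : rcfType} {s} (M : 'M[R]_(s.+1 + s.*2)) : \tr M =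
  \sum_(a < s.+1) M (lshift _ a) (lshift _ a) + \sum_(j < s.*2) M (rshift _ j) (rshift _ j).
Proof. by rewrite /mxtrace big_split_ord. Qed.



Lemma sgn2 {R : rcfType} (b : bool) : (-1) ^+ b * (-1) ^+ b = 1 :> R.
Proof. by rewrite -signr_addb addbb expr0. Qed.

Lemma Zstar_trace {R : rcfType} s : (0 < s)%N -> frob R 1%:M (Zstar R s) = (s + 2)%:R.
Proof.
move=> s0.
rewrite /frob trmx1 mul1mx tr_split big_ord_recl (ZL0 s ord0).
rewrite (eq_bigr (fun _ => (s%:R : R)^-1)); last by move=> c _; rewrite ZLdiag.
rewrite [X in _ + X](eq_bigr (fun _ => (2 : R)^-1)); last first.
  move=> j _; rewrite (ZRR s j j) eqxx mul1r.
  have e := sgn2 (R:=R) (odd j); rewrite e; clear e.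
  have h4 : (4 : R) != 0 by rewrite pnatr_eq0.
  have h2 : (2 : R) != 0 by rewrite pnatr_eq0.
  by field.
rewrite !sumr_const !card_ord.
have h : (s%:R : R) != 0 by rewrite pnatr_eq0 -lt0n.
have h2 : (2 : R) != 0 by rewrite pnatr_eq0.
rewrite (_ : ((ord0 : 'I_s.+1) == 0 :> nat) = true) //.
rewrite -[_^-1 *+ s]mulr_natr -[_^-1 *+ s.*2]mulr_natr -muln2 natrM natrD.
have -> : (true%:R : R) = 1 by [].
by field.
Qed.

Lemma Z11E {R : rcfType} s (M : 'M[R]_(s.+1 + s.*2)) a b : Z11 R M a b = M (lshift _ a) (lshift _ b).
Proof. by rewrite /Z11 !mxE. Qed.
Lemma Z21E {R : rcfType} s (M : 'M[R]_(s.+1 + s.*2)) a b : Z21 R M a b = M (rshift _ a) (lshift _ b).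
Proof. by rewrite /Z21 !mxE. Qed.
Lemma Z22E {R : rcfType} s (M : 'M[R]_(s.+1 + s.*2)) a b : Z22 R M a b = M (rshift _ a) (rshift _ b).
Proof. by rewrite /Z22 !mxE. Qed.
Lemma mul_ev0 {R : rcfType} {m n} (M : 'M[R]_(m, n.+1)) a : (M *m ev R n.+1 0) a 0 = M a ord0.
Proof.
rewrite mxE (eq_bigr (fun b : 'I_n.+1 => (b == (ord0 : 'I_n.+1) :> nat)%:R * M a b)); last first.
  by move=> b _; rewrite /ev mxE mulrC.
by rewrite sum1o.
Qed.
Lemma rowT {R : rcfType} {m n} (M : 'M[R]_(m, n)) j c : ((row j M)^T) c 0 = M j c.
Proof. by rewrite !mxE. Qed.

Lemma bfM_scale {R : rcfType} {n} (M : 'M[R]_n) a x y : bf (a *: M) x y = a * bf M x y.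
Proof. by rewrite /bf -scalemxAr -scalemxAl mxE. Qed.
Lemma bfM_add {R : rcfType} {n} (M N : 'M[R]_n) x y : bf (M + N) x y = bf M x y + bf N x y.
Proof. by rewrite /bf mulmxDr mulmxDl mxE. Qed.
Lemma bfM_sum {R : rcfType} {n} k (M : 'I_k -> 'M[R]_n) x y :
  bf (\sum_(i < k) M i) x y = \sum_(i < k) bf (M i) x y.
Proof. by rewrite /bf mulmx_sumr mulmx_suml summxE. Qed.
Lemma bf_outer {R : rcfType} {n} (v x : 'cV[R]_n) : bf (v *m v^T) x x = ((v^T *m x) 0 0) ^+ 2.
Proof.
rewrite /bf mulmxA -mulmxA.
have -> : (x^T *m v) = (v^T *m x)^T by rewrite trmx_mul trmxK.
set w := v^T *m x.
by rewrite mxE big_ord1 mxE expr2.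
Qed.

Lemma Zstar_J {R : rcfType} s : (0 < s)%N -> 0 <= frob R (Jmat R s) (Z11 R (Zstar R s)).
Proof.
move=> s0; rewrite frobJ (Z11E s (Zstar R s) 0 0) (ZL0 s ord0).
rewrite (eq_bigr (fun _ => (s%:R : R)^-1)); last by move=> c _; rewrite (Z11E s) ZLdiag.
rewrite sumr_const card_ord -[_^-1 *+ s]mulr_natr mulVf ?pnatr_eq0 -?lt0n //.
by rewrite (_ : ((ord0 : 'I_s.+1) == 0 :> nat) = true) // subrr.
Qed.

Lemma Zstar_U2 {R : rcfType} s : U2hat R (Z11 R (Zstar R s) *m ev R s.+1 0).
Proof.
rewrite /U2hat /tailnorm mul_ev0 (Z11E s) (ZL0 s ord0).
rewrite big1; last by move=> i _; rewrite mul_ev0 (Z11E s) (ZL0 s) lift0 expr2 mul0r.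
by rewrite sqrtr0 (_ : ((ord0 : 'I_s.+1) == 0 :> nat) = true).
Qed.

Lemma sgn_bound {R : rcfType} (b c : bool) : 0 <= 4^-1 * (1 + b%:R * (-1) ^+ c) :> R.
Proof.
apply: mulr_ge0; first by rewrite invr_ge0 ler0n.
by case: b; case: c; rewrite ?expr0 ?expr1 ?mul1r ?mul0r /=; lra.
Qed.

Lemma Zstar_Z22 {R : rcfType} s : forall i j, 0 <= Z22 R (Zstar R s) i j.
Proof.
move=> i j; rewrite (Z22E s) (ZRR s i j) -signr_addb.
exact: sgn_bound.
Qed.

Lemma Zstar_rows {R : rcfType} s : (0 < s)%N -> forall j, U2hat R (row j (Z21 R (Zstar R s)))^T.
Proof.
move=> s0 j.
have [sq [t0 t1]] := sqrt_facts (R:=R) s s0.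
set t := Num.sqrt (s%:R : R) in sq t0 t1 *.
rewrite /U2hat /tailnorm rowT (Z21E s) (ZRL s j ord0).
rewrite (eq_bigr (fun i : 'I_s => ((i : nat) == j./2)%:R * (4^-1 * (2%:R / t)) ^+ 2)); last first.
  move=> i _; rewrite rowT (Z21E s) (ZRL s j (lift ord0 i)) lift0 eqSS.
  case: (i == j./2 :> nat); last by rewrite /= !mulr0 addr0 expr2 !mulr0 mul0r.
  rewrite /= mulr0 add0r mulr1 mul1r !exprMn.
  have e : ((-1) ^+ odd j) ^+ 2 = 1 :> R by rewrite expr2 (sgn2 (R:=R) (odd j)).
  by rewrite e mul1r.
rewrite (sum1n s j./2 (fun _ => (4^-1 * (2%:R / t)) ^+ 2)).
have -> : (j./2 < s)%N = true by have := ltn_ord j; lia.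
rewrite mul1r sqrtr_sqr.
have -> : ((ord0 : 'I_s.+1) == 0 :> nat) = true by [].
have -> : ((ord0 : 'I_s.+1) == (j./2).+1 :> nat) = false by [].
rewrite ger0_norm; last by apply: mulr_ge0; [rewrite invr_ge0 ler0n | apply: divr_ge0; [rewrite ler0n | exact: ltW]].
rewrite /= mulr0 addr0 mulr1.
apply: ler_wpM2l; first by rewrite invr_ge0 ler0n.
rewrite ler_pdivrMr //; rewrite -subr_ge0.
have -> : (2%:R * t - 2%:R : R) = 2%:R * (t - 1) by ring.
by apply: mulr_ge0; [rewrite ler0n | rewrite subr_ge0].
Qed.

Lemma Zstar_psd {R : rcfType} s : psd R (Zstar R s).
Proof.
move=> x; rewrite -/(bf _ x x) /Zstar bfM_scale bfM_add bfM_sum bf_outer.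
apply: mulr_ge0; first by rewrite invr_ge0 ler0n.
apply: addr_ge0; first exact: sqr_ge0.
by apply: sumr_ge0 => i _; rewrite bf_outer sqr_ge0.
Qed.

Lemma Zstar_g1 {R : rcfType} s : frob R (g1 R s *m (g1 R s)^T) (Zstar R s) = 1.
Proof.
by rewrite frob_outer g1_delta bf_delta (ZL0 s ord0).
Qed.

Lemma Zstar_obj {R : rcfType} s : (0 < s)%N ->
  objective R (Zstar R s) = 2^-1 * (Num.sqrt s%:R + s%:R).
Proof.
move=> s0.
have [sq [t0 t1]] := sqrt_facts (R:=R) s s0.
have hs2 : (0 < s.*2)%N by rewrite double_gt0.
pose j0 := Ordinal hs2.
rewrite (obj_formula s j0).
rewrite (eq_bigr (fun _ => (2 : R)^-1)); last first.
  move=> j _; rewrite (ZRL s j ord0).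
  have -> : ((ord0 : 'I_s.+1) == 0 :> nat) = true by [].
  have -> : ((ord0 : 'I_s.+1) == (j./2).+1 :> nat) = false by [].
  rewrite /= mulr0 addr0 mulr1.
  have h4 : (4 : R) != 0 by rewrite pnatr_eq0.
  have h2 : (2 : R) != 0 by rewrite pnatr_eq0.
  by field.
rewrite [X in _ + _ * X](eq_bigr (fun _ => (Num.sqrt (s%:R : R))^-1)); last first.
  move=> i _; rewrite (ZRL s _ (inord i.+1)) (ZRL s _ (inord i.+1)).
  rewrite !val_insubd ltn_double ltn_Sdouble ltnS ltn_ord /=.
  rewrite doubleK uphalf_half odd_double add0n doubleK eqxx /= expr0 expr1.
  have h4 : (4 : R) != 0 by rewrite pnatr_eq0.
  have h2 : (2 : R) != 0 by rewrite pnatr_eq0.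
  have ht : Num.sqrt (s%:R : R) != 0 by rewrite lt0r_neq0.
  by field.
rewrite !sumr_const !card_ord -[_^-1 *+ s.*2]mulr_natr -[_^-1 *+ s]mulr_natr.
rewrite -muln2 natrM.
have h2 : (2 : R) != 0 by rewrite pnatr_eq0.
have ht : Num.sqrt (s%:R : R) != 0 by rewrite lt0r_neq0.
set t := Num.sqrt (s%:R : R) in sq ht *.
rewrite -sq; by field.
Qed.

Theorem proposition7 (R : rcfType) (s : nat) (r : R) :
  (2 <= s)%N ->
  0 < r ->
  (s + 2)%:R <= r ->
  (forall (u : 'cV[R]_s.+1) (w : 'cV[R]_(s.*2)),
      u ord0 0 = 1 -> tailnorm R u <= 1 ->
      extreme_point R (Wpoly R s) w ->
      sqnorm R u + sqnorm R w <= r) ->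
  optimal R s r (Zstar R s) /\ objective R (Zstar R s) = 2^-1 * (Num.sqrt s%:R + s%:R).
Proof.
move=> s2 r0 hr _.
have s0 : (0 < s)%N by apply: leq_trans s2.
have feas : feasible R s r (Zstar R s).
  split; first exact: Zstar_sym.
  split; first by move=> i; rewrite EZstar mul0mx mxE.
  split; first by rewrite Zstar_trace.
  split; first exact: Zstar_J.
  split; first exact: Zstar_U2.
  split; first exact: Zstar_Z22.
  split; first exact: Zstar_rows.
  split; first exact: Zstar_psd.
  exact: Zstar_g1.
split; last exact: Zstar_obj.
split => // Z' hZ'; rewrite Zstar_obj //; exact: upper hZ'.
Qed.
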